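(* Let $A$ be an antilinear operator on a complex $n$-dimensional space $W$, let $\lambda>0$ be real, and for $k\ge0$ put $W_\lambda^{(k)}=\ker(A^2-\lambda^2 I)^k$ (a complex subspace) and $\widetilde W_\lambda^{(k)}=\{x\in W:(A-\lambda I)^kx=0\}$ (a real subspace). Then any basis of the real vector space $\widetilde W_\lambda^{(k)}$ is also a basis of the complex vector space $W_\lambda^{(k)}$.
   Context: An antilinear operator satisfies $A(zv+w)=\bar z Av+Aw$. Since $\lambda$ is real, $A-\lambda I$ is antilinear and its iterates' kernels are real vector subspaces. *)

(* Defs.v *)
From HB Require Import structures.
From mathcomp Require Import all_boot all_order all_algebra.
Set Implicit Arguments. Unset Strict Implicit. Unset Printing Implicit Defensive.
Import Order.TTheory GRing.Theory Num.Theory.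
Local Open Scope ring_scope.

Definition antilinear (C : numClosedFieldType) (n : nat)
  (A : 'rV[C]_n -> 'rV[C]_n) : Prop :=
  forall (z : C) (v w : 'rV[C]_n), A (z *: v + w) = z^* *: A v + A w.

Definition Wk (C : numClosedFieldType) (n : nat) (A : 'rV[C]_n -> 'rV[C]_n)
  (lam : C) (k : nat) : pred 'rV[C]_n :=
  fun x => iter k (fun y => A (A y) - lam ^+ 2 *: y) x == 0.

Definition Wtk (C : numClosedFieldType) (n : nat) (A : 'rV[C]_n -> 'rV[C]_n)
  (lam : C) (k : nat) : pred 'rV[C]_n :=
  fun x => iter k (fun y => A y - lam *: y) x == 0.

Definition real_basis_of (C : numClosedFieldType) (n : nat)
  (S : pred 'rV[C]_n) (s : seq 'rV[C]_n) : Prop :=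
  [/\ (forall v, v \in s -> S v),
      (forall c : 'I_(size s) -> C, (forall i, c i \is Num.real) ->
          \sum_(i < size s) c i *: s`_i = 0 -> forall i, c i = 0)
    & (forall x, S x -> exists c : 'I_(size s) -> C,
          (forall i, c i \is Num.real) /\ x = \sum_(i < size s) c i *: s`_i)].

Definition complex_basis_of (C : numClosedFieldType) (n : nat)
  (S : pred 'rV[C]_n) (s : seq 'rV[C]_n) : Prop :=
  free s /\ (forall x, S x <-> x \in <<s>>%VS).

(* Main.v *)
Require Import Defs.
From HB Require Import structures.
From mathcomp Require Import all_boot all_order all_algebra.
From mathcomp Require Import zify ring.
Import Order.TTheory GRing.Theory Num.Theory.
Local Open Scope ring_scope.
Set Implicit Arguments. Unset Strict Implicit.

Section Aux.
Variables (C : numClosedFieldType) (n : nat).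
Local Notation V := 'rV[C]_n.

Definition lin_on (P : pred C) (f : V -> V) :=
  forall a v w, P a -> f (a *: v + w) = a *: f v + f w.

Lemma lin_on0 (P : pred C) f : P 1 -> lin_on P f -> f 0 = 0.
Proof.
move=> P1 H; have := H 1 0 0 P1; rewrite !scale1r !addr0.
by move/(congr1 (fun t => t - f 0)); rewrite subrr addrK; move/esym.
Qed.

Lemma lin_onZ (P : pred C) f a v : P 1 -> lin_on P f -> P a -> f (a *: v) = a *: f v.
Proof. by move=> P1 H Pa; rewrite -[a *: v]addr0 H // (lin_on0 P1 H) addr0. Qed.

Lemma lin_onD (P : pred C) f v w : P 1 -> lin_on P f -> f (v + w) = f v + f w.
Proof. by move=> P1 H; rewrite -[v]scale1r H // !scale1r. Qed.

Lemma lin_on_iter (P : pred C) f m : lin_on P f -> lin_on P (iter m f).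
Proof.
move=> H; elim: m => [|m IH] a v w Pa //=.
by rewrite IH // H.
Qed.

Lemma lin_on_sum (P : pred C) f m (c : 'I_m -> C) (v : 'I_m -> V) : P 1 -> lin_on P f ->
  (forall i, P (c i)) ->
  f (\sum_(i < m) c i *: v i) = \sum_(i < m) c i *: f (v i).
Proof.
move=> P1 H Pc.
apply: (big_rec2 (fun y1 y2 => f y1 = y2)); first exact: lin_on0 P1 H.
by move=> i y1 y2 _ <-; rewrite H.
Qed.

Lemma comm_iter (f g : V -> V) m x : (forall y, f (g y) = g (f y)) ->
  iter m f (g x) = g (iter m f x).
Proof. by move=> H; elim: m => [|m IH] //=; rewrite IH H. Qed.

Lemma comm_iter2 (f g : V -> V) m l x : (forall y, f (g y) = g (f y)) ->
  iter m f (iter l g x) = iter l g (iter m f x).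
Proof.
move=> H; elim: l => [|l IH] //=; rewrite -IH; exact: comm_iter.
Qed.

Local Notation RR := (fun x : C => x \is Num.real).
Lemma rlinZ f a v : a \is Num.real -> lin_on RR f -> f (a *: v) = a *: f v.
Proof. by move=> Ra H; apply: (lin_onZ (P := RR)) => //; apply: rpred1. Qed.

Lemma rlinB f v w : lin_on RR f -> f (v - w) = f v - f w.
Proof.
move=> H; rewrite (lin_onD v (-w) (rpred1 _) H) -scaleN1r.
by rewrite (rlinZ _ (rpredN1 _) H) scaleN1r.
Qed.

Variables (P Q : V -> V) (c : C).
Hypotheses (linP : lin_on RR P) (linQ : lin_on RR Q)
  (PQ : forall y, P (Q y) = Q (P y)) (cR : c \is Num.real) (c0 : c != 0)
  (QP : forall y, Q y - P y = c *: y).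

Lemma QPc y : Q (P y) = P (Q y). Proof. by rewrite PQ. Qed.
Lemma P0 : P 0 = 0. Proof. exact: lin_on0 (rpred1 _) linP. Qed.
Lemma Q0 : Q 0 = 0. Proof. exact: lin_on0 (rpred1 _) linQ. Qed.

Lemma inter_aux N a b y : (a + b <= N)%N -> iter a P y = 0 -> iter b Q y = 0 -> y = 0.
Proof.
elim: N a b y => [|N IH] a b y hN.
  by have -> : a = 0%N by lia.
case: a hN => [|a]; first by [].
case: b => [|b] hN hP hQ; first by [].
have hPy : P y = 0.
  apply: (IH a b.+1); first by lia.
    by rewrite -iterSr.
  by rewrite (comm_iter _ _ QPc) hQ P0.
have hQy : Q y = 0.
  apply: (IH a.+1 b); first by lia.
    by rewrite (comm_iter _ _ PQ) hP Q0.
  by rewrite -iterSr.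
have : c *: y = 0 by rewrite -QP hPy hQy subr0.
by move/eqP; rewrite scaler_eq0 (negbTE c0) /= => /eqP.
Qed.

Lemma inter a b y : iter a P y = 0 -> iter b Q y = 0 -> y = 0.
Proof. exact: (@inter_aux (a + b)). Qed.

Lemma decomp_aux N a b x : (a + b <= N)%N -> iter a P (iter b Q x) = 0 ->
  exists u w, [/\ x = u + w, iter a P u = 0 & iter b Q w = 0].
Proof.
elim: N a b x => [|N IH] a b x hN h.
  have ha : a = 0%N by lia.
  subst a.
  by exists 0, x; rewrite add0r.
case: a hN h => [|a] hN h; first by exists 0, x; rewrite add0r.
case: b hN h => [|b] hN h; first by exists x, 0; rewrite addr0.
have [u1 [w1 [e1 hu1 hw1]]] : exists u w, [/\ P x = u + w, iter a P u = 0 & iter b.+1 Q w = 0].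
  apply: IH; first by lia.
  by rewrite (comm_iter _ _ QPc) -iterSr.
have [u2 [w2 [e2 hu2 hw2]]] : exists u w, [/\ Q x = u + w, iter a.+1 P u = 0 & iter b Q w = 0].
  apply: IH; first by lia.
  by rewrite -iterSr.
have cVR : c^-1 \is Num.real by rewrite realV.
exists (c^-1 *: (u2 - u1)), (c^-1 *: (w2 - w1)); split.
- rewrite -scalerDr addrACA -opprD -e1 -e2 QP scalerA mulVf //.
  by rewrite scale1r.
- rewrite (rlinZ _ cVR (lin_on_iter a.+1 linP)).
  rewrite (rlinB _ _ (lin_on_iter a.+1 linP)).
  by rewrite hu2 [iter a.+1 P u1]/= hu1 P0 subrr scaler0.
- rewrite (rlinZ _ cVR (lin_on_iter b.+1 linQ)).
  rewrite (rlinB _ _ (lin_on_iter b.+1 linQ)).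
  by rewrite hw1 [iter b.+1 Q w2]/= hw2 Q0 subrr scaler0.
Qed.

Lemma decomp a b x : iter a P (iter b Q x) = 0 ->
  exists u w, [/\ x = u + w, iter a P u = 0 & iter b Q w = 0].
Proof. exact: (@decomp_aux (a + b)). Qed.

End Aux.

Section Main.
Variables (C : numClosedFieldType) (n : nat) (A : 'rV[C]_n -> 'rV[C]_n) (lam : C).
Hypotheses (hA : antilinear A) (lamR : lam \is Num.real).
Local Notation V := 'rV[C]_n.
Local Notation RR := (fun x : C => x \is Num.real).

Let B := fun y : V => A y - lam *: y.
Let B' := fun y : V => A y + lam *: y.
Let N := fun y : V => A (A y) - lam ^+ 2 *: y.

Lemma A0 : A 0 = 0.
Proof.
have := hA 1 0 0; rewrite !scale1r !addr0 conjC1 scale1r.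
by move/(congr1 (fun t => t - A 0)); rewrite subrr addrK; move/esym.
Qed.

Lemma AZ z v : A (z *: v) = z^* *: A v.
Proof. by rewrite -[z *: v]addr0 hA A0 addr0. Qed.

Lemma AD v w : A (v + w) = A v + A w.
Proof. by rewrite -[v]scale1r hA conjC1 !scale1r. Qed.

Lemma AB v w : A (v - w) = A v - A w.
Proof. by rewrite AD -scaleN1r AZ rmorphN1 scaleN1r. Qed.

Lemma linA : lin_on RR A.
Proof. by move=> a v w Ra; rewrite hA conj_Creal. Qed.

Lemma linB : lin_on RR B.
Proof.
move=> a v w Ra; rewrite /B linA // scalerDr scalerBr !scalerA (mulrC lam a) -scalerA.
by rewrite opprD addrACA.
Qed.

Lemma linB' : lin_on RR B'.
Proof.
move=> a v w Ra; rewrite /B' linA // scalerDr scalerDr !scalerA (mulrC lam a) -scalerA.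
by rewrite addrACA.
Qed.

Lemma linN : lin_on (fun _ => true) N.
Proof.
move=> a v w _; rewrite /N hA hA conjCK scalerDr scalerBr !scalerA (mulrC _ a) -scalerA.
by rewrite opprD addrACA.
Qed.

Lemma BB' y : B (B' y) = B' (B y).
Proof.
rewrite /B /B' AD AB !AZ conj_Creal //.
rewrite scalerDr scalerBr.
rewrite opprD !addrA; congr (_ - _).
by rewrite addrK subrK.
Qed.

Lemma NB y : N y = B (B' y).
Proof.
rewrite /N /B /B' AD AZ conj_Creal // scalerDr scalerA -expr2.
by rewrite opprD addrA addrK.
Qed.

Lemma iterN k y : iter k N y = iter k B (iter k B' y).
Proof.
elim: k y => [|k IH] y //=.
by rewrite IH NB -(comm_iter _ _ BB').
Qed.

Lemma diffB y : B' y - B y = (lam + lam) *: y.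
Proof.
by rewrite /B /B' opprB addrC addrA subrK -scalerDl.
Qed.

Lemma iB m y : iter m B ('i *: y) = ((-1) ^+ m * 'i) *: iter m B' y.
Proof.
elim: m => [|m IH] /=; first by rewrite expr0 mul1r.
rewrite IH /B /B' AZ rmorphM rmorphXn rmorphN1 -[Num.Num_conj__canonical__GRing_RMorphism C 'i]/('i^*) conjCi.
rewrite scalerDr !scalerA exprS.
congr (_ + _); first by congr (_ *: _); ring.
by rewrite -scaleNr; congr (_ *: _); ring.
Qed.

End Main.

Theorem mainTheorem5 (C : numClosedFieldType) (n : nat)
  (A : 'rV[C]_n -> 'rV[C]_n) (lam : C) (k : nat) (s : seq 'rV[C]_n) :
  antilinear A -> lam \is Num.real -> 0 < lam ->
  real_basis_of (Wtk A lam k) s ->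
  complex_basis_of (Wk A lam k) s.
Proof.
move=> hA lamR lam0 [hs hind hspan].
set B := fun y : 'rV[C]_n => A y - lam *: y.
set B' := fun y : 'rV[C]_n => A y + lam *: y.
have lB : lin_on (fun x : C => x \is Num.real) B := linB lam hA.
have lB' : lin_on (fun x : C => x \is Num.real) B' := linB' lam hA.
have cB : forall y, B (B' y) = B' (B y) := BB' hA lamR.
have dB : forall y, B' y - B y = (lam + lam) *: y by move=> y; apply: diffB.
have c0 : lam + lam != 0 by rewrite gt_eqF // addr_gt0.
have cR : lam + lam \is Num.real by rewrite rpredD.
have hsi : forall i : 'I_(size s), iter k B s`_i = 0.
  by move=> i; apply/eqP; apply: hs; apply: mem_nth.
have hsum : forall S, (forall x, S x -> iter k B x = 0) -> forall x, S x ->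
    x \in <<s>>%VS.
  move=> S hS x /hS/eqP/hspan [c [_ ->]].
  by apply: rpred_sum => i _; apply: memvZ; apply: memv_span; apply: mem_nth.
split.
- apply/(@freeP _ _ _ (in_tuple s)) => c hc.
  set u := \sum_(i < size s) 'Re (c i) *: s`_i.
  set v := \sum_(i < size s) 'Im (c i) *: s`_i.
  have ec : u + 'i *: v = 0.
    rewrite -hc /u /v scaler_sumr -big_split; apply: eq_bigr => i _.
    by rewrite {3}[c i]Crect scalerDl scalerA.
  have hu : iter k B u = 0.
    rewrite (lin_on_sum _ (rpred1 _) (lin_on_iter k lB)); last by move=> i; exact: Creal_Re.
    by apply: big1 => i _; rewrite hsi scaler0.
  have hv : iter k B v = 0.
    rewrite (lin_on_sum _ (rpred1 _) (lin_on_iter k lB)); last by move=> i; exact: Creal_Im.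
    by apply: big1 => i _; rewrite hsi scaler0.
  have hiv : iter k B ('i *: v) = 0.
    have -> : 'i *: v = 0 - u by apply/eqP; rewrite sub0r -addr_eq0 addrC ec.
    by rewrite (rlinB _ _ (lin_on_iter k lB)) hu subr0 (lin_on0 (rpred1 _) (lin_on_iter k lB)).
  have hv' : iter k B' v = 0.
    move: hiv; rewrite (iB lam hA) => /eqP; rewrite scaler_eq0 mulf_eq0 expf_eq0.
    by rewrite oppr_eq0 oner_eq0 andbF (negbTE (neq0Ci _)) /= => /eqP.
  have v0 : v = 0 by apply: (inter lB lB' cB cR c0 dB hv hv').
  have u0 : u = 0 by move: ec; rewrite v0 scaler0 addr0.
  have hre := hind (fun i => 'Re (c i)) (fun i => Creal_Re _) u0.
  have him := hind (fun i => 'Im (c i)) (fun i => Creal_Im _) v0.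
  by move=> i; rewrite [c i]Crect hre him mulr0 addr0.
- move=> x; split.
  + move=> hx.
    have : iter k B (iter k B' x) = 0 by rewrite -(iterN hA lamR); apply/eqP.
    case/(decomp lB lB' cB cR c0 dB) => u [w [-> hu hw]].
    apply: rpredD.
      by apply: (hsum (fun y => iter k B y = 0)).
    have -> : w = (- 'i) *: ('i *: w).
      by rewrite scalerA mulNr -expr2 sqrCi opprK scale1r.
    apply: memvZ; apply: (hsum (fun y => iter k B y = 0)) => //.
    by rewrite (iB lam hA) hw scaler0.
  + move=> hx; have hx' : x \in <<in_tuple s>>%VS := hx.
    apply/eqP; rewrite (coord_span hx').
    rewrite (lin_on_sum _ (erefl true) (lin_on_iter k (linN lam hA))) //.
    apply: big1 => i _; rewrite (iterN hA lamR) (comm_iter2 _ _ _ cB).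
    by rewrite hsi (lin_on0 (rpred1 _) (lin_on_iter k lB')) scaler0.
Qed.
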